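(* The matrix $$U_6=\tfrac12 S_0\otimes\left(I_2\otimes I_2+\sigma_1\otimes\sigma_1+\sigma_2\otimes\sigma_2+\sigma_3\otimes\sigma_3\right)+\tfrac{1}{\sqrt2}S_3\otimes\left(I_2\otimes\sigma_1+\sigma_2\otimes\sigma_3\right)$$ on $\mathbb{C}^2\otimes\mathbb{C}^2\otimes\mathbb{C}^2$ is unitary and $\mathrm{sr}(U_6)=6$.
   Context: $S_0=\begin{bmatrix}1&0\\0&0\end{bmatrix}$, $S_1=\begin{bmatrix}0&1\\0&0\end{bmatrix}$, $S_2=\begin{bmatrix}0&0\\1&0\end{bmatrix}$, $S_3=\begin{bmatrix}0&0\\0&1\end{bmatrix}$. $I_2$ is the $2\times2$ identity and $\sigma_1=\begin{bmatrix}0&1\\1&0\end{bmatrix}$, $\sigma_2=\begin{bmatrix}0&-i\\i&0\end{bmatrix}$, $\sigma_3=\begin{bmatrix}1&0\\0&-1\end{bmatrix}$ are the Pauli matrices. For a matrix $U$ on $\mathbb{C}^2\otimes\mathbb{C}^2\otimes\mathbb{C}^2$ (systems $A,B,C$), its Schmidt rank $\mathrm{sr}(U)$ is the least integer $r$ such that $U=\sum_{j=1}^r A_j\otimes B_j\otimes C_j$ with $A_j,B_j,C_j$ complex $2\times 2$ matrices (i.e. the tensor rank of $U$). *)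

(* Defs.v *)
From mathcomp Require Import all_boot all_order all_algebra all_field.
From mathcomp.real_closed Require Import mxtens.
Set Implicit Arguments. Unset Strict Implicit. Unset Printing Implicit Defensive.
Import GRing.Theory Num.Theory.
Local Open Scope ring_scope.

Definition M2 := 'M[algC]_2.
Definition M8 := 'M[algC]_(2 * (2 * 2)).

Definition S0 : M2 := \matrix_(i < 2, j < 2) ((i == 0 :> nat) && (j == 0 :> nat))%:R.
Definition S1 : M2 := \matrix_(i < 2, j < 2) ((i == 0 :> nat) && (j == 1 :> nat))%:R.
Definition S2 : M2 := \matrix_(i < 2, j < 2) ((i == 1 :> nat) && (j == 0 :> nat))%:R.
Definition S3 : M2 := \matrix_(i < 2, j < 2) ((i == 1 :> nat) && (j == 1 :> nat))%:R.

Definition I2 : M2 := 1%:M.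
Definition sigma1 : M2 := S1 + S2.
Definition sigma2 : M2 := (- 'i) *: S1 + 'i *: S2.
Definition sigma3 : M2 := S0 - S3.

Definition tens3 (A B C : M2) : M8 := A *t (B *t C).

Definition adjmx (U : M8) : M8 := (map_mx (fun z : algC => z^*) U)^T.
Definition unitary (U : M8) : Prop := U *m adjmx U = 1%:M /\ adjmx U *m U = 1%:M.

Definition sr_le (U : M8) (r : nat) : Prop :=
  exists (A B C : 'I_r -> M2), U = \sum_(j < r) tens3 (A j) (B j) (C j).

Definition sr_eq (U : M8) (r : nat) : Prop :=
  sr_le U r /\ forall r', sr_le U r' -> (r <= r')%N.

Definition U6 : M8 :=
  (1 / 2) *: tens3 S0 I2 I2 + (1 / 2) *: tens3 S0 sigma1 sigma1
  + (1 / 2) *: tens3 S0 sigma2 sigma2 + (1 / 2) *: tens3 S0 sigma3 sigma3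
  + (1 / sqrtC 2) *: tens3 S3 I2 sigma1 + (1 / sqrtC 2) *: tens3 S3 sigma2 sigma3.

(* Main.v *)
Require Import Defs.
From mathcomp Require Import all_boot all_order all_algebra all_field.
From mathcomp.real_closed Require Import mxtens.
From mathcomp Require Import zify ring.
Import Order.TTheory GRing.Theory Num.Theory.
Local Open Scope ring_scope.

Section Core.
Variable F : fieldType.

Lemma ab2 (a b : F) : a * b * b = 0 -> a * b = 0.
Proof.
move/eqP; rewrite mulf_eq0 => /orP[/eqP//|/eqP->]; by rewrite mulr0.
Qed.

Lemma core r (U : 'M[F]_(4, r)) (W : 'M[F]_(r, 4)) (d : 'rV[F]_r) :
  (r <= 5)%N -> U *m W = 1%:M ->
  let N := U *m diag_mx d *m W in
  N *m N = 0 -> (2 <= \rank N)%N -> False.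
Proof.
move=> hr hUW N hNN hrN.
set D := diag_mx d.
set c := cokermx U.
have rU : \rank U = 4%N.
  apply/eqP; rewrite eqn_leq rank_leq_row /=.
  by rewrite -{1}(mxrank1 F 4) -hUW mxrankM_maxl.
have rc : (\rank c <= 1)%N by rewrite mxrank_coker rU; lia.
have Hk : forall z : 'rV[F]_4, z *m (U *m D *m c) = 0 ->
    z *m N *m U = z *m U *m D.
  move=> z hz.
  have : (z *m U *m D <= U)%MS by rewrite submxE -!mulmxA (mulmxA U) hz.
  case/submxP=> t ht.
  by rewrite /N !mulmxA ht -(mulmxA t) hUW mulmx1.
set K := kermx (U *m D *m c).
set K2 := kermx (N *m (U *m D *m c)).
set KN := kermx N.
have rK : (3 <= \rank K)%N.
  rewrite mxrank_ker.
  have := mxrankM_maxr (U *m D) c; lia.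
have rK2 : (3 <= \rank K2)%N.
  rewrite mxrank_ker.
  have := mxrankM_maxr (N *m (U *m D)) c; rewrite !mulmxA; lia.
have rK' : (2 <= \rank (K :&: K2))%N.
  have := mxrank_sum_cap K K2; have := rank_leq_col (K + K2)%MS; lia.
have rKN : (\rank KN <= 2)%N by rewrite mxrank_ker; lia.
have key : forall z : 'rV[F]_4, (z <= K)%MS -> (z <= K2)%MS -> z *m N = 0.
  move=> z; rewrite !sub_kermx => /eqP h1 /eqP h2.
  have e1 := Hk z h1.
  have e2 : z *m N *m N *m U = z *m N *m U *m D.
    by apply: Hk; rewrite -mulmxA.
  have e3 : z *m U *m D *m D = 0.
    by rewrite -e1 -e2 -(mulmxA z N N) hNN mulmx0 !mul0mx.
  have e4 : z *m U *m D = 0.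
    apply/rowP=> j; move/rowP: e3 => /(_ j).
    rewrite /D !mul_mx_diag !mxE => h.
    by apply: ab2; rewrite h.
  by rewrite -[z *m N]mulmx1 -hUW mulmxA e1 e4 mul0mx.
have sK'KN : (K :&: K2 <= KN)%MS.
  apply/row_subP=> i; rewrite sub_kermx; apply/eqP; apply: key.
    exact: submx_trans (row_sub _ _) (capmxSl _ _).
  exact: submx_trans (row_sub _ _) (capmxSr _ _).
have sKNK' : (KN <= K :&: K2)%MS.
  have := mxrank_leqif_sup sK'KN => -[_ <-]; apply/eqP; have := mxrankS sK'KN; lia.
have sKKN : (K <= KN)%MS.
  apply/row_subP=> i; rewrite sub_kermx; apply/eqP; apply: key.
    exact: row_sub.
  have hzN : (row i K *m N <= KN)%MS.
    by rewrite sub_kermx -mulmxA hNN mulmx0.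
  have : (row i K *m N <= K)%MS.
    exact: submx_trans hzN (submx_trans sKNK' (capmxSl _ _)).
  by rewrite !sub_kermx (mulmxA (row i K) N).
have := mxrankS sKKN; lia.
Qed.
End Core.

Lemma shift_ok r (a b : 'rV[algC]_r) : exists s : algC,
  forall j, b 0 j != 0 -> a 0 j + s * b 0 j != 0.
Proof.
exists (1 + \sum_j `|a 0 j / b 0 j|) => j bj0.
set s := 1 + _.
have s_ge : `|a 0 j / b 0 j| < s.
  rewrite /s; apply: ltr_pwDl; first exact: ltr01.
  rewrite (bigD1 j) //= lerDl; apply: sumr_ge0 => i _; exact: normr_ge0.
apply/eqP => h.
have hs : s = - (a 0 j / b 0 j).
  have e : s * b 0 j = - a 0 j by apply/eqP; rewrite -addr_eq0 addrC h.
  by rewrite -[s](mulfK bj0) e mulNr.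
have s0 : 0 <= s.
  rewrite /s; apply: addr_ge0; first exact: ler01.
  apply: sumr_ge0 => i _; exact: normr_ge0.
by move: s_ge; rewrite -normrN -hs ger0_norm // ltxx.
Qed.

Lemma pencil r (U : 'M[algC]_(4, r)) (W : 'M[algC]_(r, 4)) (a b : 'rV[algC]_r)
  (Xi : 'M[algC]_4) :
  (r <= 5)%N -> (U *m diag_mx a *m W) *m Xi = 1%:M ->
  let N := (U *m diag_mx b *m W) *m Xi in
  N *m N = 0 -> (2 <= \rank N)%N -> False.
Proof.
move=> hr hX N hNN hrN.
have [s hs] := shift_ok _ a b.
set a' := \row_(j < r) (a 0 j + s * b 0 j).
set d := \row_(j < r) (b 0 j / a' 0 j).
set U' := U *m diag_mx a'.
set W' := W *m Xi *m (1%:M - s *: N).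
have eU' : U' = U *m diag_mx a + s *: (U *m diag_mx b).
  apply/matrixP=> i j; rewrite /U' !mul_mx_diag !mxE; ring.
have eU'd : U' *m diag_mx d = U *m diag_mx b.
  apply/matrixP=> i j; rewrite /U' !mul_mx_diag !mxE.
  have [bj|bj] := eqVneq (b 0 j) 0; first by rewrite bj mul0r !mulr0.
  by rewrite -mulrA; congr (_ * _); rewrite mulrC divfK //; exact: hs.
have hXY : U' *m (W *m Xi) = 1%:M + s *: N.
  by rewrite eU' mulmxDl -scalemxAl !mulmxA hX.
have hW'N : U *m diag_mx b *m W' = N.
  rewrite /W' !mulmxA -/N mulmxBr mulmx1 -scalemxAr hNN scaler0 subr0 //.
apply: (@core _ r U' W' d hr).
- rewrite /W' mulmxA hXY mulmxBr mulmx1 mulmxDl mul1mx -scalemxAl.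
  by rewrite -scalemxAr hNN !scaler0 addr0 addrK.
- by rewrite eU'd hW'N.
- by rewrite eU'd hW'N.
Qed.

Definition tbl n (f : nat -> nat -> algC) : 'M[algC]_n := \matrix_(i, j) f i j.

Definition eU (i j : nat) : algC :=
  match i, j with
  | 0, 0 | 1, 2 | 2, 1 | 3, 3 => 1
  | 4, 5 | 5, 4 | 6, 7 | 7, 6 => 1 / sqrtC 2
  | 4, 6 | 7, 5 => - 'i * (1 / sqrtC 2)
  | 5, 7 | 6, 4 => 'i * (1 / sqrtC 2)
  | _, _ => 0
  end.

Lemma ii2 : 'i ^+ 2 = -1 :> algC. Proof. by rewrite sqrCi. Qed.
Lemma s22 : sqrtC 2 ^+ 2 = 2 :> algC. Proof. by rewrite sqrtCK. Qed.
Lemma s2n0 : sqrtC 2 != 0 :> algC. Proof. by rewrite sqrtC_eq0 pnatr_eq0. Qed.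

Ltac c8 i := case: i => [[|[|[|[|[|[|[|[|?]]]]]]]] ?] //.
Ltac simp := rewrite ?(mul0r, mulr0, add0r, addr0, mulr1, mul1r, subr0, sub0r, oppr0).

Lemma U6E : U6 = tbl (2 * (2 * 2)) eU.
Proof.
apply/matrixP=> i j.
rewrite /U6 /tens3 /sigma1 /sigma2 /sigma3 /I2 /S0 /S1 /S2 /S3 /tbl !mxE.
have := s2n0; move=> hs.
c8 i; c8 j; simpl.
all: field: ii2 s22; rewrite ?s2n0 //.
Qed.

Ltac c4 i := case: i => [[|[|[|[|?]]]] ?] //.
Ltac c2 i := case: i => [[|[|?]] ?] //.

Lemma conj_c : (1 / sqrtC 2)^* = 1 / sqrtC 2 :> algC.
Proof. by rewrite geC0_conj // divr_ge0 ?ler01 // sqrtC_ge0 ler0n. Qed.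
Lemma conj_ic : ('i * (1 / sqrtC 2))^* = - 'i * (1 / sqrtC 2) :> algC.
Proof. have -> : ('i * (1/sqrtC 2))^* = 'i^* * (1/sqrtC 2)^* :> algC := rmorphM _ _ _. by rewrite conj_c conjCi. Qed.
Lemma conj_mic : (- 'i * (1 / sqrtC 2))^* = 'i * (1 / sqrtC 2) :> algC.
Proof. have -> : (- 'i * (1/sqrtC 2))^* = (- 'i)^* * (1/sqrtC 2)^* :> algC := rmorphM _ _ _. have -> : (- 'i)^* = - ('i^*) :> algC := rmorphN _ _. by rewrite conj_c conjCi opprK. Qed.

Lemma adjU6 : adjmx U6 = U6.
Proof.
rewrite U6E /adjmx; apply/matrixP=> i j; rewrite !mxE.
c8 i; c8 j; simpl; rewrite ?(conj_mic, conj_ic, rmorph1, rmorph0, conj_c) //.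
Qed.

Lemma U6U6 : U6 *m U6 = 1%:M.
Proof.
rewrite U6E /tbl; apply/matrixP=> i j; rewrite mxE !big_ord_recl big_ord0 !mxE.
have := s2n0; move=> hs.
c8 i; c8 j; simpl.
all: field: ii2 s22; rewrite ?s2n0 //.
Qed.

Lemma unitU6 : unitary U6.
Proof. by rewrite /unitary adjU6 U6U6. Qed.

Definition Rl (a : 'I_2) (M : M8) : 'M[algC]_(2 * 2) :=
  \matrix_(p, q) M (mxtens_index (a, mxtens_index ((mxtens_unindex p).1, (mxtens_unindex q).1)))
                   (mxtens_index (a, mxtens_index ((mxtens_unindex p).2, (mxtens_unindex q).2))).

Definition Umat r (B : 'I_r -> M2) : 'M[algC]_(2 * 2, r) :=
  \matrix_(p, j) B j (mxtens_unindex p).1 (mxtens_unindex p).2.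
Definition Wmat r (C : 'I_r -> M2) : 'M[algC]_(r, 2 * 2) :=
  \matrix_(j, q) C j (mxtens_unindex q).1 (mxtens_unindex q).2.

Arguments Umat {r}.
Arguments Wmat {r}.

Lemma Rl_sum r (A B C : 'I_r -> M2) a :
  Rl a (\sum_(j < r) tens3 (A j) (B j) (C j)) =
  Umat B *m diag_mx (\row_j A j a a) *m Wmat C.
Proof.
apply/matrixP=> p q; rewrite mul_mx_diag [LHS]mxE summxE [RHS]mxE.
apply: eq_bigr => j _; rewrite /tens3 !tensmxE !mxE; ring.
Qed.

Definition eX (i j : nat) : algC :=
  match i, j with
  | 0, 0 | 1, 2 | 2, 1 | 3, 3 => 1
  | _, _ => 0
  end.
Definition eY (i j : nat) : algC :=
  match i, j with
  | 0, 1 | 0, 2 | 3, 1 | 3, 2 => 1 / sqrtC 2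
  | 1, 0 | 2, 3 => - 'i * (1 / sqrtC 2)
  | 1, 3 | 2, 0 => 'i * (1 / sqrtC 2)
  | _, _ => 0
  end.

Lemma RX : Rl 0 U6 = tbl (2 * 2) eX.
Proof. rewrite U6E; apply/matrixP=> p q; rewrite !mxE; c4 p; c4 q. Qed.
Lemma RY : Rl 1 U6 = tbl (2 * 2) eY.
Proof. rewrite U6E; apply/matrixP=> p q; rewrite !mxE; c4 p; c4 q. Qed.

Lemma XX : tbl (2 * 2) eX *m tbl (2 * 2) eX = 1%:M.
Proof.
apply/matrixP=> i j; rewrite mxE !big_ord_recl big_ord0 !mxE.
c4 i; c4 j; simpl.
all: field: ii2 s22; rewrite ?s2n0 //.
Qed.

Lemma YX : tbl (2 * 2) eY *m tbl (2 * 2) eX = tbl (2 * 2) eY.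
Proof.
apply/matrixP=> i j; rewrite mxE !big_ord_recl big_ord0 !mxE.
c4 i; c4 j; simpl.
all: field: ii2 s22; rewrite ?s2n0 //.
Qed.

Lemma YY : tbl (2 * 2) eY *m tbl (2 * 2) eY = 0.
Proof.
apply/matrixP=> i j; rewrite mxE !big_ord_recl big_ord0 !mxE.
have := s2n0; move=> hs.
c4 i; c4 j; simpl.
all: field: ii2 s22; rewrite ?s2n0 //.
Qed.

Definition Pm : 'M[algC]_(2, 2 * 2) :=
  \matrix_(i, j) (if (i == j :> nat) then 1 else 0).
Definition Qm : 'M[algC]_(2 * 2, 2) :=
  \matrix_(i, j) (match nat_of_ord i, nat_of_ord j with
                  | 1, 0 => sqrtC 2 | 0, 1 => 'i * sqrtC 2 | _, _ => 0 end).

Lemma PYQ : Pm *m tbl (2 * 2) eY *m Qm = 1%:M.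
Proof.
apply/matrixP=> i j; rewrite !(mxE, big_ord_recl, big_ord0).
have := s2n0; move=> hs.
c2 i; c2 j; simpl.
all: field: ii2 s22; rewrite ?s2n0 //.
Qed.

Lemma rankY : (2 <= \rank (tbl (2 * 2) eY))%N.
Proof.
have := mxrankM_maxl (Pm *m tbl (2 * 2) eY) Qm.
have := mxrankM_maxr Pm (tbl (2 * 2) eY).
rewrite PYQ mxrank1 => h1 h2; exact: leq_trans h2 h1.
Qed.

Definition Adec (j : 'I_6) : M2 :=
  if (j < 4)%N then (1 / 4) *: S0 else (1 / sqrtC 2) *: S3.
Definition Bdec (j : 'I_6) : M2 :=
  match nat_of_ord j with
  | 0 => I2 + sigma1 | 1 => I2 - sigma1 | 2 => sigma2 + sigma3
  | 3 => sigma2 - sigma3 | 4 => I2 | _ => sigma2 end.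
Definition Cdec (j : 'I_6) : M2 :=
  match nat_of_ord j with
  | 0 => I2 + sigma1 | 1 => I2 - sigma1 | 2 => sigma2 + sigma3
  | 3 => sigma2 - sigma3 | 4 => sigma1 | _ => sigma3 end.

Lemma decU6 : U6 = \sum_(j < 6) tens3 (Adec j) (Bdec j) (Cdec j).
Proof.
rewrite U6E; apply/matrixP=> i j.
rewrite summxE !big_ord_recl big_ord0 /=.
rewrite /Adec /Bdec /Cdec /= /tens3 /sigma1 /sigma2 /sigma3 /I2 /S0 /S1 /S2 /S3 /tbl !mxE.
have := s2n0; move=> hs.
c8 i; c8 j; simpl.
all: field: ii2 s22; rewrite ?s2n0 //.
Qed.

Theorem mainTheorem5 : unitary U6 /\ sr_eq U6 6.
Proof.
split; first exact: unitU6.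
split; first by exists Adec, Bdec, Cdec; exact: decU6.
move=> r [A [B [C hU]]].
rewrite leqNgt; apply/negP => hr.
apply: (@pencil r (Umat B) (Wmat C) (\row_j A j 0 0) (\row_j A j 1 1) (tbl (2 * 2) eX)).
- by [].
- by rewrite -Rl_sum -hU RX XX.
- by rewrite -Rl_sum -hU RY YX YY.
- by rewrite -Rl_sum -hU RY YX; exact: rankY.
Qed.
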